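(* Let $h>0$, $N\in\mathbb{N}$, $\mu>0$, $\alpha,\beta\in[0,1/2]$, and let $L_d:\mathbb{R}^d\times\mathbb{R}^d\to\mathbb{R}$ be $C^1$. Let $\gamma(z)=\rho(z)/\sigma(z)$ with $\rho_0/\sigma_0>0$ (e.g. $\gamma=\gamma_p$, $\gamma_p(z)=\sum_{j=1}^p\frac1j(1-z)^j$) and for real $a$ let $\omega^{(a)}_n$ be the Taylor coefficients of $(\gamma(z)/h)^{-a}$; define $\mathcal{J}_{-}^{a}x_k=\sum_{n=0}^{k}\omega_n^{(a)}x_{k-n}$, $\mathcal{J}_{+}^{a}y_k=\sum_{n=0}^{N-k}\omega_n^{(a)}y_{k+n}$. For sequences $x_d=(x_k)_{k=0}^N$, $y_d=(y_k)_{k=0}^N$ in $\mathbb{R}^d$ define the discrete action $$\mathcal{S}_d(x_d,y_d)=\sum_{k=0}^{N-1}\big(L_d(x_k,x_{k+1})+L_d(y_k,y_{k+1})\big)-\mu h\sum_{k=0}^{N}\mathcal{J}_{-}^{-\alpha}x_k\cdot\mathcal{J}_{+}^{-\beta}y_k .$$ Suppose $x_d,y_d$ satisfy, for all $k=1,\dots,N-1$, $$D_1L_d(x_k,x_{k+1})+D_2L_d(x_{k-1},x_k)=\mu h\,\mathcal{J}_{-}^{-(\alpha+\beta)}x_k,\qquad D_1L_d(y_k,y_{k+1})+D_2L_d(y_{k-1},y_k)=\mu h\,\mathcal{J}_{+}^{-(\alpha+\beta)}y_k,$$ where $D_i$ denotes the gradient with respect to the $i$-th argument. Then $(x_d,y_d)$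 is an extremal of $\mathcal{S}_d$ under restricted variations: for every sequence $(\delta x_k)_{k=0}^N$ in $\mathbb{R}^d$ with $\delta x_0=\delta x_N=0$, $$\frac{d}{d\epsilon}\Big|_{\epsilon=0}\mathcal{S}_d\big((x_k+\epsilon\delta x_k)_k,(y_k+\epsilon\delta x_k)_k\big)=0.$$
   Context: Restricted variations: the same variation $\delta x$ is applied to both doubled variables $x$ and $y$. $\mathcal{J}^{-\alpha}_{\pm}$ are convolution-quadrature approximations of left/right Riemann–Liouville fractional derivatives; the choice $\gamma_1(z)=1-z$ gives Grünwald–Letnikov weights. *)

(* Defs.v *)
From HB Require Import structures.
From mathcomp Require Import all_boot all_order all_algebra.
From mathcomp Require Import all_classical all_reals all_analysis.
Set Implicit Arguments. Unset Strict Implicit. Unset Printing Implicit Defensive.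
Import Order.TTheory GRing.Theory Num.Theory.
Import numFieldNormedType.Exports.
Local Open Scope ring_scope.

Section Defs.
Variable R : realType.

Definition gammaf (rho sigma : {poly R}) (z : R) : R := rho.[z] / sigma.[z].

Definition omega (rho sigma : {poly R}) (h a : R) (n : nat) : R :=
  derive1n n (fun z : R => powR (gammaf rho sigma z / h) (- a)) 0 / n`!%:R.

Definition Jminus d (rho sigma : {poly R}) (h a : R) (x : nat -> 'rV[R]_d)
  (k : nat) : 'rV[R]_d :=
  \sum_(n < k.+1) omega rho sigma h a n *: x (k - n)%N.

Definition Jplus d (rho sigma : {poly R}) (h a : R) (N : nat)
  (y : nat -> 'rV[R]_d) (k : nat) : 'rV[R]_d :=
  \sum_(n < (N - k).+1) omega rho sigma h a n *: y (k + n)%N.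

Definition dotv d (u v : 'rV[R]_d) : R := \sum_(j < d) u ord0 j * v ord0 j.

Definition grad1 d (L : 'rV[R]_d -> 'rV[R]_d -> R) (a b : 'rV[R]_d) : 'rV[R]_d :=
  \row_(j < d) 'D_(delta_mx ord0 j) (fun u => L u b) a.
Definition grad2 d (L : 'rV[R]_d -> 'rV[R]_d -> R) (a b : 'rV[R]_d) : 'rV[R]_d :=
  \row_(j < d) 'D_(delta_mx ord0 j) (fun u => L a u) b.

Definition C1 d (L : 'rV[R]_d -> 'rV[R]_d -> R) : Prop :=
  forall j : 'I_d,
    (forall a b : 'rV[R]_d,
        derivable (fun u => L u b) a (delta_mx ord0 j) /\
        derivable (fun u => L a u) b (delta_mx ord0 j)) /\
    continuous (fun p : 'rV[R]_d * 'rV[R]_d =>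
                  'D_(delta_mx ord0 j) (fun u => L u p.2) p.1) /\
    continuous (fun p : 'rV[R]_d * 'rV[R]_d =>
                  'D_(delta_mx ord0 j) (fun u => L p.1 u) p.2).

Definition action d (L : 'rV[R]_d -> 'rV[R]_d -> R) (rho sigma : {poly R})
  (h mu alpha beta : R) (N : nat) (x y : nat -> 'rV[R]_d) : R :=
  \sum_(k < N) (L (x k) (x k.+1) + L (y k) (y k.+1))
  - mu * h * \sum_(k < N.+1)
      dotv (Jminus rho sigma h (- alpha) x k) (Jplus rho sigma h (- beta) N y k).

End Defs.

(* Main.v *)
Require Import Defs.
From HB Require Import structures.
From mathcomp Require Import all_boot all_order all_algebra.
From mathcomp Require Import all_classical all_reals all_analysis.
From mathcomp.algebra_tactics Require Import ring lra.
From mathcomp Require Import zify.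
Set Implicit Arguments. Unset Strict Implicit. Unset Printing Implicit Defensive.
Import Order.TTheory GRing.Theory Num.Theory.
Import numFieldNormedType.Exports.
Local Open Scope ring_scope.

Lemma pascal_sum (R : comNzRingType) (a b : nat -> R) n :
  \sum_(i < n.+1) 'C(n, i)%:R * (a i.+1 * b (n - i)%N + a i * b (n.+1 - i)%N) =
  \sum_(i < n.+2) 'C(n.+1, i)%:R * (a i * b (n.+1 - i)%N).
Proof.
rewrite [RHS]big_ord_recl /= bin0 subn0 mul1r.
rewrite [X in _ = _ + X](eq_bigr (fun i : 'I_n.+1 => 'C(n, i.+1)%:R * (a i.+1 * b (n - i)%N)
   + 'C(n, i)%:R * (a i.+1 * b (n - i)%N))); last first.
  by move=> i _; rewrite /bump add1n binS natrD mulrDl subSS.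
rewrite big_split /=.
rewrite (eq_bigr (fun i : 'I_n.+1 => 'C(n, i)%:R * (a i.+1 * b (n - i)%N)
   + 'C(n, i)%:R * (a i * b (n.+1 - i)%N))); last by move=> i _; rewrite mulrDr.
rewrite big_split /= [RHS]addrA [RHS]addrC; congr (_ + _).
rewrite big_ord_recl /= bin0 mul1r subn0; congr (_ + _).
rewrite [RHS]big_ord_recr /= bin_small // mul0r addr0.
by apply: eq_bigr => i _; rewrite /bump add1n subSS.
Qed.

Section Smooth.
Variable R : realType.
Variable U : set R.
Hypothesis Uo : open U.

Lemma U_near z : U z -> \forall t \near z, U t.
Proof. move=> Uz; exact: (Uo Uz). Qed.

Lemma loc_D1 (f g : R -> R) z : (\forall t \near z, f t = g t) ->
  derive1 f z = derive1 g z.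
Proof. by move=> fg; rewrite !derive1E; apply: near_eq_derive. Qed.

Lemma loc_Dn (f g : R -> R) : (forall z, U z -> f z = g z) ->
  forall n z, U z -> derive1n n f z = derive1n n g z.
Proof.
move=> fg n; elim: n => [|n IH] z Uz; first exact: fg.
rewrite !derive1nS; apply: loc_D1.
by near=> t; apply: IH; near: t; exact: U_near.
Unshelve. all: by end_near. Qed.

Lemma loc_derivable (f g : R -> R) z : (\forall t \near z, g t = f t) ->
  derivable g z 1 -> derivable f z 1.
Proof. by move=> fg; apply: near_eq_derivable. Qed.

Definition Sm (f : R -> R) := forall n z, U z -> derivable (derive1n n f) z 1.

Lemma Sm_D f : Sm f -> Sm (derive1 f).
Proof. by move=> Sf n z Uz; rewrite -derive1Sn; exact: Sf. Qed.

Lemma Sm_cst c : Sm (fun=> c).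
Proof.
move=> n z Uz; suff -> : derive1n n (fun=> c) = fun=> (if n is 0 then c else 0).
  exact: derivable_cst.
elim: n => [//|n IH]; rewrite derive1nS IH; apply/funext => t.
by rewrite derive1_cst.
Qed.

Lemma DnD f g : Sm f -> Sm g -> forall n z, U z ->
  derive1n n (fun t => f t + g t) z = derive1n n f z + derive1n n g z.
Proof.
move=> Sf Sg n; elim: n => [//|n IH] z Uz.
rewrite !derive1nS (@loc_D1 _ (derive1n n f + derive1n n g)); last first.
  by near=> t; apply: IH; near: t; exact: U_near.
by rewrite !derive1E deriveD //; [exact: Sf| exact: Sg].
Unshelve. all: by end_near. Qed.

Lemma Sm_add f g : Sm f -> Sm g -> Sm (fun t => f t + g t).
Proof.
move=> Sf Sg n z Uz; apply: (@loc_derivable _ (derive1n n f + derive1n n g)).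
  by near=> t; rewrite DnD //; near: t; exact: U_near.
by apply: derivableD; [exact: Sf|exact: Sg].
Unshelve. all: by end_near. Qed.

Lemma is_derive_CM (F G : R -> R) (z c dF dG : R) : is_derive z 1 F dF ->
  is_derive z 1 G dG ->
  is_derive z 1 (fun t => c * (F t * G t)) (c * (dF * G z + F z * dG)).
Proof.
move=> hF hG.
have -> : (fun t => c * (F t * G t)) = c *: (F * G) by apply/funext.
apply: (is_derive_eq (is_deriveZ c (is_deriveM hF hG))).
change (c * (F z * dG + G z * dF) = c * (dF * G z + F z * dG)); ring.
Qed.

Lemma leibniz f g : Sm f -> Sm g -> forall n z, U z ->
  derive1n n (fun t => f t * g t) z =
  \sum_(i < n.+1) 'C(n, i)%:R * (derive1n i f z * derive1n (n - i) g z).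
Proof.
move=> Sf Sg n; elim: n => [|n IH] z Uz.
  by rewrite big_ord1 /= bin0 mul1r.
rewrite derive1nS (@loc_D1 _ (fun t => \sum_(i < n.+1)
   'C(n, i)%:R * (derive1n i f t * derive1n (n - i) g t))); last first.
  by near=> t; apply: IH; near: t; exact: U_near.
rewrite -(pascal_sum (fun i => derive1n i f z) (fun i => derive1n i g z)).
have -> : (fun t => \sum_(i < n.+1)
   'C(n, i)%:R * (derive1n i f t * derive1n (n - i) g t)) =
   \sum_(i < n.+1) (fun t => 'C(n, i)%:R * (derive1n i f t * derive1n (n - i) g t)).
  by apply/funext => t; rewrite fct_sumE.
rewrite derive1E.
have H : forall i : 'I_n.+1, is_derive z 1
   (fun t => 'C(n, i)%:R * (derive1n i f t * derive1n (n - i) g t))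
   ('C(n, i)%:R * (derive1n i.+1 f z * derive1n (n - i) g z +
                    derive1n i f z * derive1n (n.+1 - i) g z)).
  move=> i.
  have df : is_derive z 1 (derive1n i f) (derive1n i.+1 f z).
    by rewrite derive1nS derive1E; apply: derivableP; exact: Sf.
  have dg : is_derive z 1 (derive1n (n - i) g) (derive1n (n.+1 - i) g z).
    have hi : (i <= n)%N by rewrite -ltnS.
    rewrite (subSn hi) derive1nS derive1E; apply: derivableP; exact: Sg.
  by apply: is_derive_CM.
by have := is_derive_sum H => -[_ ->].
Unshelve. all: by end_near. Qed.

Lemma is_derive_M' (F G : R -> R) (z dF dG : R) : is_derive z 1 F dF ->
  is_derive z 1 G dG ->
  is_derive z 1 (fun t => F t * G t) (dF * G z + F z * dG).
Proof.
move=> hF hG.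
have -> : (fun t => F t * G t) = (F * G) by apply/funext.
apply: (is_derive_eq (is_deriveM hF hG)).
change (F z * dG + G z * dF = dF * G z + F z * dG); ring.
Qed.

Lemma Sm_mul f g : Sm f -> Sm g -> Sm (fun t => f t * g t).
Proof.
move=> Sf Sg n z Uz.
apply: (@loc_derivable _ (\sum_(i < n.+1) (fun t => 'C(n, i)%:R *
   (derive1n i f t * derive1n (n - i) g t)))).
  by near=> t; rewrite fct_sumE leibniz //; near: t; exact: U_near.
apply: derivable_sum => i.
by have [] := is_derive_CM 'C(n, i)%:R (derivableP (Sf i z Uz))
  (derivableP (Sg (n - i)%N z Uz)).
Unshelve. all: by end_near. Qed.

Lemma Sm_ode E q : Sm q -> (forall z, U z -> is_derive z 1 E (q z * E z)) ->
  Sm E.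
Proof.
move=> Sq hE.
have key : forall n p, Sm p -> forall z, U z ->
    derivable (derive1n n (fun t => p t * E t)) z 1.
  elim=> [|n IH] p Sp z Uz.
    by have [] := is_derive_M' (derivableP (Sp 0%N z Uz)) (hE z Uz).
  apply: (@loc_derivable _ (derive1n n
     (fun t => (derive1 p t + p t * q t) * E t))).
    near=> t; rewrite derive1Sn; apply: esym; apply: loc_Dn; last first.
      by near: t; exact: U_near.
    move=> s Us.
    rewrite derive1E.
    have := is_derive_M' (derivableP (Sp 0%N s Us)) (hE s Us).
    rewrite !derive1n0 => -[_ ->].
    by rewrite -derive1E; ring.
  apply: IH => //; apply: Sm_add; first exact: Sm_D.
  exact: Sm_mul.
have -> : E = (fun t => (fun=> 1) t * E t) by apply/funext => t; rewrite mul1r.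
by move=> n; apply: key; exact: Sm_cst.
Unshelve. all: by end_near. Qed.

Lemma rat_deriv (p q : {poly R}) z : q.[z] != 0 ->
  is_derive z 1 (fun t => p.[t] / q.[t])
    ((p^`() * q - p * q^`()).[z] / (q ^+ 2).[z]).
Proof.
move=> qz.
have := is_derive_M' (is_derive_poly p z) (is_deriveV qz (is_derive_poly q z)).
move=> D; apply: (is_derive_eq D).
rewrite !hornerE /GRing.scale /=.
by field; rewrite qz.
Qed.

Lemma Sm_rat (p s : {poly R}) : (forall z, U z -> s.[z] != 0) ->
  Sm (fun t => p.[t] / s.[t]).
Proof.
move=> hs n; elim: n p s hs => [|n IH] p s hs z Uz.
  by have [] := rat_deriv p (hs z Uz).
apply: (@loc_derivable _ (derive1n n
   (fun t => (p^`() * s - p * s^`()).[t] / (s ^+ 2).[t]))).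
  near=> t; rewrite derive1Sn; apply: esym; apply: loc_Dn; last first.
    by near: t; exact: U_near.
  move=> u Uu.
  by rewrite derive1E; have [_ ->] := rat_deriv p (hs u Uu).
apply: IH => // u Uu; rewrite horner_exp expf_neq0 //; exact: hs.
Unshelve. all: by end_near. Qed.

End Smooth.
Arguments Sm {R}.

Section Omega.
Variables (R : realType) (rho sigma : {poly R}) (h : R).
Hypotheses (h0 : 0 < h) (g0 : 0 < rho`_0 / sigma`_0).

Let pp := h^-1 *: rho.
Let gg t := gammaf rho sigma t / h.

Let ggE t : gg t = pp.[t] / sigma.[t].
Proof. by rewrite /gg /gammaf /pp hornerZ; ring. Qed.

Let A : set R := fun t => 0 < gg t.
Let U := interior A.

Let U_open : open U.
Proof. exact: open_interior. Qed.

Let UA t : U t -> 0 < gg t.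
Proof. by move=> /interior_subset. Qed.

Let Us t : U t -> sigma.[t] != 0.
Proof.
move=> /UA; rewrite ggE; apply: contraTneq => ->.
by rewrite invr0 mulr0 ltxx.
Qed.

Let Up t : U t -> pp.[t] != 0.
Proof.
move=> /UA; rewrite ggE; apply: contraTneq => ->.
by rewrite mul0r ltxx.
Qed.

Let U0 : U 0.
Proof.
have gg0 : 0 < gg 0 by rewrite /gg /gammaf !horner_coef0 divr_gt0.
have s0 : sigma.[0] != 0.
  move: gg0; rewrite ggE; apply: contraTneq => ->.
  by rewrite invr0 mulr0 ltxx.
change (nbhs (0:R) A).
have [D _] := rat_deriv pp s0.
have C : {for 0, continuous (fun t => pp.[t] / sigma.[t])}.
  exact/differentiable_continuous/derivable1_diffP.
have := cvgr_gt _ C; rewrite -ggE => /(_ _ 0 gg0).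
by apply: filterS => t; rewrite /A /= ggE.
Qed.

Definition Fp c t := powR (gg t) c.

Definition qq c t := (c *: (pp^`() * sigma - pp * sigma^`())).[t] / (sigma * pp).[t].

Let F_deriv c t : U t -> is_derive t 1 (Fp c) (qq c t * Fp c t).
Proof.
move=> Ut.
have -> : Fp c = ((@powR R) ^~ c) \o (fun t => pp.[t] / sigma.[t]).
  by apply/funext => s; rewrite /Fp /= ggE.
have := is_derive1_comp (@is_derive1_powR R c _ _) (rat_deriv pp (Us Ut)).
rewrite -ggE => /(_ (UA Ut)) D; apply: (is_derive_eq D).
have gpos := UA Ut.
rewrite powRB; last by rewrite (gt_eqF gpos) implybT.
rewrite powRr1 ?ltW // /qq /Fp /comp /=.
rewrite ggE in gpos *.
have s := Us Ut; have p := Up Ut.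
set X := powR (pp.[t] / sigma.[t]) c.
rewrite !hornerE.
have ppE : pp.[t] = h^-1 * rho.[t] by rewrite hornerZ.
rewrite ppE in p *.
have hn : h != 0 by rewrite gt_eqF.
rewrite mulf_eq0 negb_or in p; case/andP: p => _ p.
set N := (pp^`().[t] * sigma.[t] - h^-1 * rho.[t] * sigma^`().[t]).
have E : c * X * (h^-1 * rho.[t] / sigma.[t])^-1 * N * (sigma.[t] ^- 2) =
  c * N / (sigma.[t] * h^-1 * rho.[t]) * X by field; rewrite s p hn.
exact: E.
Qed.

Lemma Fp_Sm c : Sm U (Fp c).
Proof.
apply: (Sm_ode U_open (q := qq c)); last exact: F_deriv.
apply: Sm_rat => // t Ut; rewrite hornerM mulf_neq0 //; [exact: Us | exact: Up].
Qed.

Lemma omega_add a b n : omega rho sigma h (a + b) n =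
  \sum_(i < n.+1) omega rho sigma h a i * omega rho sigma h b (n - i).
Proof.
rewrite /omega -/(Fp (- (a + b))) opprD.
rewrite (@loc_Dn _ _ U_open _ (fun t => Fp (- a) t * Fp (- b) t)) //; last first.
  move=> z Uz; rewrite /Fp powRD //.
  by rewrite (gt_eqF (UA Uz)) implybT.
rewrite (leibniz U_open (@Fp_Sm (- a)) (@Fp_Sm (- b))) // mulr_suml.
apply: eq_bigr => i _.
rewrite -/(Fp (- a)) -/(Fp (- b)).
have hi : (i <= n)%N by rewrite -ltnS.
have := bin_fact hi => /(congr1 (fun m => m%:R : R)); rewrite !natrM => E.
have f1 : (i`!%:R : R) != 0 by rewrite pnatr_eq0 -lt0n fact_gt0.
have f2 : ((n - i)`!%:R : R) != 0 by rewrite pnatr_eq0 -lt0n fact_gt0.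
have f0 : ('C(n, i)%:R : R) != 0 by rewrite pnatr_eq0 -lt0n bin_gt0.
rewrite -E.
by field; rewrite ?f0 ?f1 ?f2.
Qed.

End Omega.

Section Tri.
Variable V : nmodType.

Lemma tri_sym N (H : nat -> nat -> V) :
  \sum_(j < N.+1) \sum_(n < (N - j).+1) H j n =
  \sum_(n < N.+1) \sum_(j < (N - n).+1) H j n.
Proof.
have E : forall j : 'I_N.+1, \sum_(n < (N - j).+1) H j n =
    \sum_(n < N.+1 | (j + n <= N)%N) H j n.
  move=> j; rewrite (big_ord_widen N.+1 (H j)); last by rewrite ltnS leq_subr.
  by apply: eq_bigl => n; have := ltn_ord j; lia.
rewrite (eq_bigr _ (fun j _ => E j)) (exchange_big_dep xpredT) //=.
apply: eq_bigr => n _.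
rewrite (big_ord_widen N.+1 (H ^~ n)); last by rewrite ltnS leq_subr.
by apply: eq_bigl => j; have := ltn_ord n; lia.
Qed.

Lemma tri_shift N (G : nat -> nat -> V) :
  \sum_(k < N.+1) \sum_(n < k.+1) G k n =
  \sum_(j < N.+1) \sum_(n < (N - j).+1) G (j + n)%N n.
Proof.
rewrite (tri_sym N (fun j n => G (j + n)%N n)).
have E : forall k : 'I_N.+1, \sum_(n < k.+1) G k n =
    \sum_(n < N.+1 | (n <= k)%N) G k n.
  move=> k; rewrite (big_ord_widen N.+1 (G k)); last exact: ltn_ord.
  by apply: eq_bigl => n.
rewrite (eq_bigr _ (fun k _ => E k)) (exchange_big_dep xpredT) //=.
apply: eq_bigr => n _.
rewrite -(big_mkord (fun k => (n <= k)%N) (fun k => G k n)).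
rewrite (eq_bigl (fun k => true && (n <= k)%N)) //.
rewrite -big_nat_widenl // -{1}(add0n n) big_addn big_mkord.
have -> : (N.+1 - n = (N - n).+1)%N by have := ltn_ord n; lia.
by [].
Qed.

End Tri.

Section Dot.
Variables (R : realType) (d : nat).
Implicit Types u v : 'rV[R]_d.

Lemma dotv_suml I r (P : pred I) (F : I -> 'rV[R]_d) v :
  dotv (\sum_(i <- r | P i) F i) v = \sum_(i <- r | P i) dotv (F i) v.
Proof.
rewrite /dotv; under eq_bigr => j _ do rewrite summxE mulr_suml.
exact: exchange_big.
Qed.

Lemma dotv_sumr I r (P : pred I) (F : I -> 'rV[R]_d) u :
  dotv u (\sum_(i <- r | P i) F i) = \sum_(i <- r | P i) dotv u (F i).
Proof.
rewrite /dotv; under eq_bigr => j _ do rewrite summxE mulr_sumr.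
exact: exchange_big.
Qed.

Lemma dotvZl c u v : dotv (c *: u) v = c * dotv u v.
Proof. by rewrite /dotv mulr_sumr; apply: eq_bigr => j _; rewrite mxE mulrA. Qed.

Lemma dotvZr c u v : dotv u (c *: v) = c * dotv u v.
Proof.
by rewrite /dotv mulr_sumr; apply: eq_bigr => j _; rewrite mxE mulrCA.
Qed.

Lemma dotvDl u1 u2 v : dotv (u1 + u2) v = dotv u1 v + dotv u2 v.
Proof. by rewrite /dotv -big_split; apply: eq_bigr => j _; rewrite mxE mulrDl. Qed.

Lemma dotvDr u v1 v2 : dotv u (v1 + v2) = dotv u v1 + dotv u v2.
Proof. by rewrite /dotv -big_split; apply: eq_bigr => j _; rewrite mxE mulrDr. Qed.

Lemma dotvBl u1 u2 v : dotv (u1 - u2) v = dotv u1 v - dotv u2 v.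
Proof.
by rewrite /dotv -sumrB; apply: eq_bigr => j _; rewrite !mxE mulrBl.
Qed.

Lemma dotvC u v : dotv u v = dotv v u.
Proof. by apply: eq_bigr => j _; rewrite mulrC. Qed.

Lemma dotv0r u : dotv u 0 = 0.
Proof. by rewrite /dotv big1 // => j _; rewrite mxE mulr0. Qed.

Lemma dotv0l u : dotv 0 u = 0.
Proof. by rewrite dotvC dotv0r. Qed.

Lemma adj N (c : nat -> R) (u v : nat -> 'rV[R]_d) :
  \sum_(k < N.+1) dotv (\sum_(n < k.+1) c n *: u (k - n)%N) (v k) =
  \sum_(k < N.+1) dotv (u k) (\sum_(n < (N - k).+1) c n *: v (k + n)%N).
Proof.
under eq_bigr => k _ do rewrite dotv_suml.
under [RHS]eq_bigr => k _ do rewrite dotv_sumr.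
rewrite (tri_shift N (fun k n => dotv (c n *: u (k - n)%N) (v k))).
apply: eq_bigr => j _; apply: eq_bigr => n _.
by rewrite addnK dotvZl dotvZr.
Qed.

Lemma Jplus_comp (c1 c2 c3 : nat -> R) N (y : nat -> 'rV[R]_d) k :
  (forall s, c3 s = \sum_(i < s.+1) c1 i * c2 (s - i)%N) ->
  \sum_(n < (N - k).+1) c1 n *: (\sum_(m < (N - (k + n)).+1) c2 m *: y (k + n + m)%N)
  = \sum_(n < (N - k).+1) c3 n *: y (k + n)%N.
Proof.
move=> hc.
under [RHS]eq_bigr => s _ do rewrite hc scaler_suml.
rewrite (tri_shift (N - k) (fun s i => (c1 i * c2 (s - i)%N) *: y (k + s)%N)).
under eq_bigr => n _ do rewrite scaler_sumr subnDA.
rewrite (tri_sym (N - k) (fun n m => c1 n *: (c2 m *: y (k + n + m)%N))).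
apply: eq_bigr => m _; apply: eq_bigr => n _.
rewrite scalerA addnK; congr (_ *: y _); lia.
Qed.

Lemma Jminus_comp (c1 c2 c3 : nat -> R) (x : nat -> 'rV[R]_d) k :
  (forall s, c3 s = \sum_(i < s.+1) c1 i * c2 (s - i)%N) ->
  \sum_(n < k.+1) c2 n *: (\sum_(m < (k - n).+1) c1 m *: x (k - n - m)%N)
  = \sum_(s < k.+1) c3 s *: x (k - s)%N.
Proof.
move=> hc.
under [RHS]eq_bigr => s _ do rewrite hc scaler_suml.
rewrite (tri_shift k (fun s i => (c1 i * c2 (s - i)%N) *: x (k - s)%N)).
under eq_bigr => n _ do rewrite scaler_sumr.
apply: eq_bigr => n _; apply: eq_bigr => m _.
rewrite scalerA addnK mulrC; congr (_ *: x _); lia.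
Qed.

End Dot.

Section Chain.
Variables (R : realType) (d : nat).
Local Notation V := 'rV[R]_d.

Lemma line_deriv (F : V -> R) (w del : V) (s : R) :
  derivable F (w + s *: del) del ->
  is_derive s 1 (fun r => F (w + r *: del)) ('D_del F (w + s *: del)).
Proof.
move=> D.
have E : (fun h : R => h^-1 *: (((fun r => F (w + r *: del)) \o shift s) (h *: (1:R))
     - (fun r => F (w + r *: del)) s)) =
   (fun h : R => h^-1 *: ((F \o shift (w + s *: del)) (h *: del) - F (w + s *: del))).
  apply/funext => h /=; congr (_ *: (F _ - _)).
  rewrite -[h *: (1:R)]/(h * 1) mulr1 scalerDl; rewrite addrC -addrA.
  by rewrite [s *: del + _]addrC.
apply: DeriveDef; first by rewrite /derivable E.
by rewrite /derive E.
Qed.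

Lemma MVT_sym (f df : R -> R) (x1 x2 : R) :
  (forall s : R, is_derive s (1:R) f (df s)) ->
  exists xi, `|xi - x1| <= `|x2 - x1| /\ f x2 - f x1 = df xi * (x2 - x1).
Proof.
move=> hf.
have cf : continuous f.
  by move=> s; apply/differentiable_continuous/derivable1_diffP; have [] := hf s.
case: (leP x1 x2) => h12.
  have [c] := MVT_segment h12 (fun s _ => hf s) (continuous_subspaceT cf).
  rewrite in_itv /= => /andP[c1 c2] E; exists c; split => //.
  by rewrite !ger0_norm ?subr_ge0 //; lra.
have [c] := MVT_segment (ltW h12) (fun s _ => hf s) (continuous_subspaceT cf).
rewrite in_itv /= => /andP[c1 c2] E; exists c; split.
  by rewrite !ler0_norm ?subr_le0 ?(ltW h12) //; lra.
by rewrite -[f x2 - f x1]opprB E -mulrN opprB.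
Qed.

Lemma step (T : topologicalType) (G : T -> V -> R) (p : R -> T) (w : R -> V)
    (t0 : T) (w0 del : V) (c : R) :
  (forall t z, derivable (G t) z del) ->
  {for (t0, w0), continuous (fun q : T * V => 'D_del (G q.1) q.2)} ->
  (p @ 0^' --> t0)%classic -> (w @ 0^' --> w0)%classic ->
  ((fun e : R => e^-1 * (G (p e) (w e + (e * c) *: del) - G (p e) (w e)))
    @ 0^' --> c * 'D_del (G t0) w0)%classic.
Proof.
move=> Gd Dc pc wc.
pose D := fun q : T * V => 'D_del (G q.1) q.2.
have hx : forall e : R, exists xi : R, `|xi| <= `|e * c| /\
    G (p e) (w e + (e * c) *: del) - G (p e) (w e) =
    D (p e, w e + xi *: del) * (e * c).
  move=> e.
  have := @MVT_sym (fun r => G (p e) (w e + r *: del))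
    (fun r => D (p e, w e + r *: del)) 0 (e * c).
  case=> [s|xi [H1 H2]]; first exact: line_deriv.
  exists xi; rewrite !subr0 in H1 H2; rewrite scale0r addr0 in H2.
  by split.
have [xi hxi] := choice hx.
have xi0 : (xi @ 0^' --> 0)%classic.
  apply/cvgrPdist_lt => eps eps0.
  have : \forall e \near dnbhs (0:R), `|e| < eps / (`|c| + 1).
    by apply: dnbhs0_lt; rewrite divr_gt0 // ltr_wpDl.
  apply: filterS => e he; rewrite sub0r normrN.
  apply: le_lt_trans (hxi e).1 _; rewrite normrM.
  rewrite ltr_pdivlMr ?ltr_wpDl // in he.
  have := normr_ge0 e; have := normr_ge0 c; nra.
have qc : ((fun e => (p e, w e + xi e *: del)) @ 0^' --> (t0, w0))%classic.
  have W : ((fun e => w e + xi e *: del) @ 0^' --> w0)%classic.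
    have -> : w0 = w0 + 0 *: del by rewrite scale0r addr0.
    by apply: cvgD => //; apply: cvgZ => //; exact: cvg_cst.
  exact: (cvg_pair pc W).
have Dq : ((fun e => D (p e, w e + xi e *: del)) @ 0^' --> D (t0, w0))%classic.
  exact: (cvg_comp _ _ qc Dc).
have L1 : ((fun e => c * D (p e, w e + xi e *: del)) @ 0^' --> c * D (t0, w0))%classic.
  by apply: cvgM => //; exact: cvg_cst.
apply: cvg_trans L1.
apply: near_eq_cvg; near=> e.
have e0 : e != 0 by near: e; exact: nbhs_dnbhs_neq.
by rewrite (hxi e).2; field.
Unshelve. all: by end_near. Qed.


Lemma cvg_sumI n (f : 'I_n -> R -> R) (l : 'I_n -> R) :
  (forall i, (f i @ 0^' --> l i)%classic) ->
  ((fun e => \sum_(i < n) f i e) @ 0^' --> \sum_(i < n) l i)%classic.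
Proof.
move=> hf.
have -> : (fun e => \sum_(i < n) f i e) = \sum_(i < n) f i.
  by apply/funext => e; rewrite fct_sumE.
elim/big_ind2 : _ => //; first exact: cvg_cst.
by move=> g1 x1 g2 x2 h1 h2; apply: cvgD.
Qed.

Lemma cvg_is_derive (phi : R -> R) l :
  ((fun e => e^-1 * (phi e - phi 0)) @ 0^' --> l)%classic ->
  is_derive (0:R) (1:R) phi l.
Proof.
move=> hc.
have E : (fun h : R => h^-1 *: ((phi \o shift 0) (h *: (1:R)) - phi 0)) =
         (fun e => e^-1 * (phi e - phi 0)).
  by apply/funext => h; rewrite /comp /= addr0 -[h *: (1:R)]/(h * 1) mulr1.
apply: DeriveDef; first by rewrite /derivable E; apply/cvg_ex; exists l.
by rewrite /derive E; exact: cvg_lim.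
Qed.

Lemma lin_cvg (a u : V) : ((fun e : R => a + e *: u) @ 0^' --> a)%classic.
Proof.
have C : {for 0, continuous (fun e : R => a + e *: u)}.
  have -> : a = a + 0 *: u by rewrite scale0r addr0.
  apply: cvgD; first exact: cvg_cst.
  by apply: cvgZ; [exact: cvg_id | exact: cvg_cst].
by move/continuous_withinNx: C; rewrite scale0r addr0.
Qed.

Definition mask (m : nat) (u : V) : V :=
  \row_(j < d) (if (j < m)%N then u ord0 j else 0).

Lemma mask0 u : mask 0 u = 0.
Proof. by apply/rowP => j; rewrite !mxE. Qed.

Lemma maskd u : mask d u = u.
Proof. by apply/rowP => j; rewrite !mxE ltn_ord. Qed.

Lemma maskS u (i : 'I_d) :
  mask i.+1 u = mask i u + u ord0 i *: delta_mx ord0 i.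
Proof.
apply/rowP => j; rewrite !mxE eqxx /=.
case: (eqVneq j i) => [->|ne]; first by rewrite ltnSn ltnn add0r mulr1.
rewrite mulr0 addr0 ltnS leq_eqVlt.
by have -> : (val j == val i) = false by apply/negbTE.
Qed.

Lemma chainL (L : V -> V -> R) (a b u v : V) : C1 L ->
  is_derive (0:R) (1:R) (fun e => L (a + e *: u) (b + e *: v))
    (dotv (grad1 L a b) u + dotv (grad2 L a b) v).
Proof.
move=> hL; apply: cvg_is_derive.
pose SA (i : 'I_d) e := e^-1 * (L (a + e *: u) (b + e *: mask i.+1 v)
   - L (a + e *: u) (b + e *: mask i v)).
pose SB (i : 'I_d) e := e^-1 * (L (a + e *: mask i.+1 u) b
   - L (a + e *: mask i u) b).
have E : (fun e => e^-1 * (L (a + e *: u) (b + e *: v) -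
                L (a + 0 *: u) (b + 0 *: v))) =
    (fun e => \sum_(i < d) SA i e + \sum_(i < d) SB i e).
  apply/funext => e; rewrite /SA /SB -!mulr_sumr.
  rewrite -(big_mkord (fun _ => true) (fun i => L (a + e *: u) (b + e *: mask i.+1 v)
     - L (a + e *: u) (b + e *: mask i v))).
  rewrite -(big_mkord (fun _ => true) (fun i => L (a + e *: mask i.+1 u) b
     - L (a + e *: mask i u) b)).
  rewrite !telescope_sumr // maskd !mask0 !scaler0 !addr0 !scale0r !addr0.
  rewrite -mulrDr; congr (_ * _).
  by rewrite !maskd addrA subrK.
have G1 : dotv (grad1 L a b) u = \sum_(i < d)
    u ord0 i * 'D_(delta_mx ord0 i) (fun z => L z b) a.
  by apply: eq_bigr => i _; rewrite mxE mulrC.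
have G2 : dotv (grad2 L a b) v = \sum_(i < d)
    v ord0 i * 'D_(delta_mx ord0 i) (fun z => L a z) b.
  by apply: eq_bigr => i _; rewrite mxE mulrC.
rewrite E addrC G1 G2; apply: cvgD.
  apply: cvg_sumI => i.
  have -> : SA i = (fun e => e^-1 * (L (a + e *: u)
       ((b + e *: mask i v) + (e * v ord0 i) *: delta_mx ord0 i)
       - L (a + e *: u) (b + e *: mask i v))).
    by apply/funext => e; rewrite /SA maskS scalerDr scalerA addrA.
  apply: (@step _ L (fun e => a + e *: u) (fun e => b + e *: mask i v)).
  - by move=> t z; have [/(_ t z) [] ] := hL i.
  - by have [_ [_ C]] := hL i; exact: C.
  - exact: lin_cvg.
  - exact: lin_cvg.
apply: cvg_sumI => i.
have -> : SB i = (fun e => e^-1 * ((fun t z => L z t) b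
     ((a + e *: mask i u) + (e * u ord0 i) *: delta_mx ord0 i)
     - (fun t z => L z t) b (a + e *: mask i u))).
  by apply/funext => e; rewrite /SB maskS scalerDr scalerA addrA.
apply: (@step _ (fun t z => L z t) (fun=> b) (fun e => a + e *: mask i u)).
- by move=> t z; have [/(_ z t) [] ] := hL i.
- have [_ [C _]] := hL i.
  have K := cvg_comp _ _ (@swap_continuous _ _ (b, a)) (C (a, b)).
  move: K; rewrite /comp /= => K.
  exact: K.
- exact: cvg_cst.
- exact: lin_cvg.
Qed.

End Chain.

Section Final.
Variable R : realType.

Lemma is_derive_sumf n (f : 'I_n -> R -> R) (df : 'I_n -> R) :
  (forall i, is_derive (0:R) (1:R) (f i) (df i)) ->
  is_derive (0:R) (1:R) (fun e => \sum_(i < n) f i e) (\sum_(i < n) df i).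
Proof.
move=> H.
have -> : (fun e => \sum_(i < n) f i e) = \sum_(i < n) f i.
  by apply/funext => e; rewrite fct_sumE.
exact: is_derive_sum.
Qed.

Lemma is_derive_addf (f g : R -> R) df dg :
  is_derive (0:R) (1:R) f df -> is_derive (0:R) (1:R) g dg ->
  is_derive (0:R) (1:R) (fun e => f e + g e) (df + dg).
Proof. by move=> hf hg; exact: (is_deriveD hf hg). Qed.

Lemma is_derive_subf (f g : R -> R) df dg :
  is_derive (0:R) (1:R) f df -> is_derive (0:R) (1:R) g dg ->
  is_derive (0:R) (1:R) (fun e => f e - g e) (df - dg).
Proof. by move=> hf hg; exact: (is_deriveB hf hg). Qed.

Lemma is_derive_scalf (c : R) (f : R -> R) df :
  is_derive (0:R) (1:R) f df ->
  is_derive (0:R) (1:R) (fun e => c * f e) (c * df).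
Proof. by move=> hf; exact: (is_deriveZ c hf). Qed.

Lemma quad (c0 c1 c2 : R) :
  is_derive (0:R) (1:R) (fun e => c0 + e * c1 + e * e * c2) c1.
Proof.
have -> : (fun e => c0 + e * c1 + e * e * c2) =
    horner (c0%:P + c1 *: 'X + c2 *: ('X * 'X)).
  apply/funext => e; rewrite !hornerE.
  have H : c0 + e * c1 + e * e * c2 = c0 + c1 * e + c2 * e * e by ring.
  exact: H.
apply: (is_derive_eq (is_derive_poly _ 0)).
rewrite !derivD derivC !derivZ derivM derivX !hornerE.
have H : c1 + c2 * 0 * 1 = c1 by ring.
exact: H.
Qed.

Lemma dot_quad d (A B C D : 'rV[R]_d) :
  is_derive (0:R) (1:R) (fun e => dotv (A + e *: B) (C + e *: D))
    (dotv B C + dotv A D).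
Proof.
have -> : (fun e => dotv (A + e *: B) (C + e *: D)) =
   (fun e => dotv A C + e * (dotv B C + dotv A D) + e * e * dotv B D).
  apply/funext => e.
  rewrite !dotvDl !dotvDr !dotvZl !dotvZr; ring.
exact: quad.
Qed.


Lemma Jminus_lin d rho sigma h c (x dx : nat -> 'rV[R]_d) (e : R) k :
  Jminus rho sigma h c (fun k => x k + e *: dx k) k =
  Jminus rho sigma h c x k + e *: Jminus rho sigma h c dx k.
Proof.
rewrite /Jminus scaler_sumr -big_split; apply: eq_bigr => n _.
by rewrite scalerDr !scalerA mulrC.
Qed.

Lemma Jplus_lin d rho sigma h c N (x dx : nat -> 'rV[R]_d) (e : R) k :
  Jplus rho sigma h c N (fun k => x k + e *: dx k) k =
  Jplus rho sigma h c N x k + e *: Jplus rho sigma h c N dx k.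
Proof.
rewrite /Jplus scaler_sumr -big_split; apply: eq_bigr => n _.
by rewrite scalerDr !scalerA mulrC.
Qed.

Lemma shift_part d N (g1 g2 dx : nat -> 'rV[R]_d) :
  dx 0%N = 0 -> dx N = 0 ->
  \sum_(k < N) (dotv (g1 k) (dx k) + dotv (g2 k) (dx k.+1)) =
  \sum_(k < N.+1) dotv (g1 k + g2 k.-1) (dx k).
Proof.
move=> dx0 dxN.
rewrite big_split /=.
under [RHS]eq_bigr => k _ do rewrite dotvDl.
rewrite big_split /=; congr (_ + _).
  by rewrite big_ord_recr /= dxN dotv0r addr0.
rewrite big_ord_recl /= dx0 dotv0r add0r.
by apply: eq_bigr => i _; rewrite /bump add1n.
Qed.

End Final.

Unset Implicit Arguments.

Theorem theorem4p2 (R : realType) (d N : nat) (h mu alpha beta : R)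
  (rho sigma : {poly R}) (L : 'rV[R]_d -> 'rV[R]_d -> R)
  (x y : nat -> 'rV[R]_d) :
  0 < h -> 0 < mu ->
  0 <= alpha <= 1/2 -> 0 <= beta <= 1/2 ->
  0 < rho`_0 / sigma`_0 ->
  C1 L ->
  (forall k : nat, (1 <= k)%N -> (k <= N.-1)%N ->
     grad1 L (x k) (x k.+1) + grad2 L (x k.-1) (x k)
     = (mu * h) *: Jminus rho sigma h (- (alpha + beta)) x k) ->
  (forall k : nat, (1 <= k)%N -> (k <= N.-1)%N ->
     grad1 L (y k) (y k.+1) + grad2 L (y k.-1) (y k)
     = (mu * h) *: Jplus rho sigma h (- (alpha + beta)) N y k) ->
  forall dx : nat -> 'rV[R]_d, dx 0%N = 0 -> dx N = 0 ->
    is_derive (0 : R) (1 : R)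
      (fun e : R => action L rho sigma h mu alpha beta N
                      (fun k => x k + e *: dx k) (fun k => y k + e *: dx k))
      0.
Proof.
move=> h0 mu0 _ _ g0 hL ELx ELy dx dx0 dxN.
have HD : is_derive (0:R) (1:R)
      (fun e : R => action L rho sigma h mu alpha beta N
                      (fun k => x k + e *: dx k) (fun k => y k + e *: dx k))
  (\sum_(k < N) ((dotv (grad1 L (x k) (x k.+1)) (dx k) +
                  dotv (grad2 L (x k) (x k.+1)) (dx k.+1)) +
                 (dotv (grad1 L (y k) (y k.+1)) (dx k) +
                  dotv (grad2 L (y k) (y k.+1)) (dx k.+1)))
   - mu * h * \sum_(k < N.+1)
      (dotv (Jminus rho sigma h (- alpha) dx k) (Jplus rho sigma h (- beta) N y k) +
       dotv (Jminus rho sigma h (- alpha) x k) (Jplus rho sigma h (- beta) N dx k))).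
  rewrite /action.
  apply: is_derive_subf.
    apply: is_derive_sumf => k; apply: is_derive_addf; exact: chainL.
  apply: is_derive_scalf; apply: is_derive_sumf => k.
  have E : (fun e : R => dotv (Jminus rho sigma h (- alpha) (fun k => x k + e *: dx k) k)
      (Jplus rho sigma h (- beta) N (fun k => y k + e *: dx k) k)) =
      (fun e : R => dotv (Jminus rho sigma h (- alpha) x k + e *: Jminus rho sigma h (- alpha) dx k)
      (Jplus rho sigma h (- beta) N y k + e *: Jplus rho sigma h (- beta) N dx k)).
    by apply/funext => e; rewrite Jminus_lin Jplus_lin.
  rewrite E; exact: dot_quad.
apply: (is_derive_eq HD).
rewrite big_split /=.
rewrite (shift_part (fun k => grad1 L (x k) (x k.+1))
                    (fun k => grad2 L (x k) (x k.+1)) dx0 dxN).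
rewrite (shift_part (fun k => grad1 L (y k) (y k.+1))
                    (fun k => grad2 L (y k) (y k.+1)) dx0 dxN).
rewrite big_split /=.
have A1 : \sum_(k < N.+1) dotv (Jminus rho sigma h (- alpha) dx k)
             (Jplus rho sigma h (- beta) N y k) =
          \sum_(k < N.+1) dotv (dx k) (Jplus rho sigma h (- (alpha + beta)) N y k).
  etransitivity.
    exact: (adj N (omega rho sigma h (- alpha)) dx (Jplus rho sigma h (- beta) N y)).
  apply: eq_bigr => k _; congr (dotv _ _).
  rewrite /Jplus (Jplus_comp _ _ _ (omega_add h0 g0 (- alpha) (- beta))).
  by rewrite opprD.
have A2 : \sum_(k < N.+1) dotv (Jminus rho sigma h (- alpha) x k)
             (Jplus rho sigma h (- beta) N dx k) =
          \sum_(k < N.+1) dotv (Jminus rho sigma h (- (alpha + beta)) x k) (dx k).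
  etransitivity.
    exact: (esym (adj N (omega rho sigma h (- beta))
                   (Jminus rho sigma h (- alpha) x) dx)).
  apply: eq_bigr => k _; congr (dotv _ _).
  rewrite /Jminus (Jminus_comp _ _ (omega_add h0 g0 (- alpha) (- beta))).
  by rewrite opprD.
rewrite A1 A2.
under [X in _ - _ * (X + _)]eq_bigr => k _ do rewrite dotvC.
rewrite -big_split /= -!big_split /= mulr_sumr -sumrB.
apply: big1 => k _.
rewrite -dotvDl -dotvDl -dotvZl -dotvBl.
case: (eqVneq (k : nat) 0%N) => [k0|k0]; first by rewrite k0 dx0 dotv0r.
case: (eqVneq (k : nat) N) => [kN|kN]; first by rewrite kN dxN dotv0r.
have k1 : (1 <= k)%N by rewrite lt0n.
have k2 : (k <= N.-1)%N by have := ltn_ord k; lia.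
rewrite prednK // ELx // ELy // -scalerDr [X in _ *: X - _]addrC subrr dotv0l //.
Qed.
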